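(* Let $P=P_1\cdots P_p$ and $T=T_1\cdots T_t$ be strings over a finite alphabet $\Sigma$, and let $R^j(m_{r,i})$ be the bits computed by the GSM recurrence described in the context. Let $(r,i)$ be any pair with $r\in\{-1,0,1\}$, $i\in\{1,\dots,p\}$ and $(r,i)\notin\{(-1,1),(1,p)\}$, and let $j\in\{i,\dots,t\}$. If there exists a swap permutation $\pi$ for $P$ such that $(\pi(P))_{[1,i]}=T_{[j-i+1,j]}$ and $\pi(i)=i+r$, then $R^j(m_{r,i})=1$.
   Context: Strings: for a string $S$, $S_i$ is its $i$-th symbol and $S_{[i,j]}=S_iS_{i+1}\cdots S_j$. A swap permutation for a string $S$ of length $n$ is a permutation $\pi$ of $\{1,\dots,n\}$ such that (i) if $\pi(i)=j$ then $\pi(j)=i$; (ii) $\pi(i)\in\{i-1,i,i+1\}$ for all $i$; (iii) if $\pi(i)\neq i$ then $S_{\pi(i)}\neq S_i$. The swapped version is $\pi(S)=S_{\pi(1)}S_{\pi(2)}\cdots S_{\pi(n)}$. Bit vectors: all vectors below are elements of $\{0,1\}^p$ with entries indexed $1,\dots,p$; $\mid$ and $\&$ are bitwise OR and AND. $\mathit{LShift}(x)_1=0$ and $\mathit{LShift}(x)_i=x_{i-1}$ for $2\le i\le p$; $\mathit{RShift}(x)_i=x_{i+1}$ for $1\le i\le p-1$ and $\mathit{RShift}(x)_p=0$; $\mathit{LSO}(x)=\mathit{LShift}(x)\mid e_1$, where $e_1$ has a $1$ in entry $1$ and $0$ elsewhere. Masks: for $x\in\Sigma$, $D^x_i=1$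 iff $P_i=x$. GSM recurrence: $R_U^0=R_M^0=R_D^0=0^p$, and for $j=1,\dots,t$: $R_U'^{\,j}=\mathit{LSO}(R_D^{j-1})$, $R_M'^{\,j}=R_D'^{\,j}=\mathit{LSO}(R_M^{j-1}\mid R_U^{j-1})$, $R_U^{j}=R_U'^{\,j}\ \&\ \mathit{LShift}(D^{T_j})$, $R_M^{j}=R_M'^{\,j}\ \&\ D^{T_j}$, $R_D^{j}=R_D'^{\,j}\ \&\ \mathit{RShift}(D^{T_j})$. Notation: $R^j(m_{-1,i})=(R_U^j)_i$, $R^j(m_{0,i})=(R_M^j)_i$, $R^j(m_{1,i})=(R_D^j)_i$. *)

(* Defs.v *)
(* Strings and bit vectors are 1-indexed functions on nat. *)
From mathcomp Require Import all_boot all_order all_algebra.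
Set Implicit Arguments. Unset Strict Implicit. Unset Printing Implicit Defensive.

Definition swap_perm (Sigma : eqType) (n : nat) (S : nat -> Sigma) (pi : nat -> nat) : Prop :=
  (forall i, 1 <= i <= n -> 1 <= pi i <= n) /\
  (forall i j, 1 <= i <= n -> 1 <= j <= n -> pi i = pi j -> i = j) /\
  (forall i j, 1 <= i <= n -> 1 <= j <= n -> pi i = j -> pi j = i) /\
  (forall i, 1 <= i <= n -> pi i = i.-1 \/ pi i = i \/ pi i = i.+1) /\
  (forall i, 1 <= i <= n -> pi i <> i -> S (pi i) <> S i).

Definition bv := nat -> bool.
Definition bvor (x y : bv) : bv := fun i => x i || y i.
Definition bvand (x y : bv) : bv := fun i => x i && y i.
Definition LShift (p : nat) (x : bv) : bv := fun i => (2 <= i <= p) && x i.-1.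
Definition RShift (p : nat) (x : bv) : bv := fun i => (1 <= i < p) && x i.+1.
Definition e1 : bv := fun i => i == 1.
Definition LSO (p : nat) (x : bv) : bv := bvor (LShift p x) e1.
Definition zerov : bv := fun _ => false.

Definition Dmask (Sigma : eqType) (p : nat) (P : nat -> Sigma) (x : Sigma) : bv :=
  fun i => (1 <= i <= p) && (P i == x).

Fixpoint GSM (Sigma : eqType) (p : nat) (P T : nat -> Sigma) (j : nat) : bv * bv * bv :=
  match j with
  | 0 => (zerov, zerov, zerov)
  | j'.+1 =>
    let '(RU, RM, RD) := GSM p P T j' in
    let D := Dmask p P (T j) in
    let RU' := LSO p RD in
    let RM' := LSO p (bvor RM RU) in
    (bvand RU' (LShift p D), bvand RM' D, bvand RM' (RShift p D))
  end.

Definition Rbit (Sigma : eqType) (p : nat) (P T : nat -> Sigma) (j : nat) (r : int) (i : nat) : bool :=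
  let '(RU, RM, RD) := GSM p P T j in
  if r == (-1)%R then RU i else if r == 0%R then RM i else RD i.

(* Main.v *)
Require Import Defs.
From mathcomp Require Import all_boot all_order all_algebra.
From mathcomp Require Import zify.

Lemma GSM_U (Sigma : finType) (p : nat) (P T : nat -> Sigma) j i :
  (GSM p P T j.+1).1.1 i = LSO p (GSM p P T j).2 i && LShift p (Dmask p P (T j.+1)) i.
Proof. by rewrite /=; case: (GSM p P T j) => [[a b] c]. Qed.
Lemma GSM_M (Sigma : finType) (p : nat) (P T : nat -> Sigma) j i :
  (GSM p P T j.+1).1.2 i = LSO p (bvor (GSM p P T j).1.2 (GSM p P T j).1.1) i
     && Dmask p P (T j.+1) i.
Proof. by rewrite /=; case: (GSM p P T j) => [[a b] c]. Qed.
Lemma GSM_D (Sigma : finType) (p : nat) (P T : nat -> Sigma) j i :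
  (GSM p P T j.+1).2 i = LSO p (bvor (GSM p P T j).1.2 (GSM p P T j).1.1) i
     && RShift p (Dmask p P (T j.+1)) i.
Proof. by rewrite /=; case: (GSM p P T j) => [[a b] c]. Qed.

Lemma key (Sigma : finType) (p : nat) (P T : nat -> Sigma) (pi : nat -> nat) :
  swap_perm p P pi ->
  forall i, 1 <= i <= p -> forall j, i <= j ->
  (forall k, 1 <= k <= i -> P (pi k) = T (j - i + k)) ->
  (pi i = i -> (GSM p P T j).1.2 i) /\
  (pi i = i.-1 -> 2 <= i -> (GSM p P T j).1.1 i) /\
  (pi i = i.+1 -> i < p -> (GSM p P T j).2 i).
Proof.
move=> [Hrange [Hinj [Hinv [Hnb _]]]].
elim=> [|i IH] // Hi [|j] // Hij Hpre.
have Hpre' : forall k, 1 <= k <= i -> P (pi k) = T (j - i + k).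
  move=> k Hk; rewrite Hpre; first by rewrite subSS. lia.
have HT : P (pi i.+1) = T j.+1 by rewrite Hpre; [congr T; lia | lia].
have HMU : 1 <= i -> pi i.+1 <> i -> 
   (GSM p P T j).1.2 i || (GSM p P T j).1.1 i.
  move=> i1 Hn1.
  have Hb : 1 <= i <= p by lia.
  have [IH1 [IH2 _]] := IH Hb j ltac:(lia) Hpre'.
  have := Hnb i Hb; case=> [E|[E|E]].
  - have r1 := Hrange i.+1 ltac:(lia).
    have r2 := Hrange i Hb.
    by rewrite IH2 ?orbT //; lia.
  - by rewrite IH1.
  - exfalso. have := Hinv i i.+1 Hb ltac:(lia) E. lia.
have Hb1 := Hrange i.+1 Hi.
split; [|split].
- move=> E; rewrite GSM_M /LSO /bvor /LShift /e1 /Dmask /=.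
  rewrite E in HT; rewrite HT eqxx andbT.
  have -> : (i < p) = true by apply/idP; lia.
  rewrite andbT.
  have [i0|i0] := posnP i; first by rewrite i0 orbT.
  rewrite HMU //; try lia.
- move=> E Hgt; rewrite GSM_U /LSO /bvor /LShift /e1 /Dmask /=.
  have i1 : 1 <= i by lia.
  have Hb : 1 <= i <= p by lia.
  have E2 := Hinv _ _ Hi Hb E.
  have [_ [_ IH3]] := IH Hb j ltac:(lia) Hpre'.
  rewrite IH3 //.
  rewrite /= in E; rewrite E in HT; rewrite HT eqxx !andbT. have -> : (1 < i.+1 <= p) = true by apply/idP; lia. by rewrite /= Hb.
- move=> E Hlt; rewrite GSM_D /LSO /bvor /LShift /RShift /e1 /Dmask /=.
  rewrite E in HT; rewrite HT eqxx andbT.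
  rewrite Hlt !andbT.
  idtac.
  idtac.
  have [i0|i0] := posnP i; first by rewrite i0 orbT.
  rewrite HMU //; try lia.
Qed.

Theorem mainTheorem1 (Sigma : finType) (p t : nat) (P T : nat -> Sigma)
    (r : int) (i j : nat) :
  (r == (-1)%R) || (r == 0%R) || (r == 1%R) ->
  1 <= i <= p ->
  ~ ((r = (-1)%R /\ i = 1) \/ (r = 1%R /\ i = p)) ->
  i <= j <= t ->
  (exists pi : nat -> nat,
      swap_perm p P pi /\
      (forall k, 1 <= k <= i -> P (pi k) = T (j - i + k)) /\
      (Posz (pi i) = (Posz i + r)%R)) ->
  Rbit p P T j r i = true.
Proof.
move=> Hr Hi Hex Hij [pi [Hsw [Hpre Hpi]]].
have Hij2 : i <= j by lia.
have [H1 [H2 H3]] := @key Sigma p P T pi Hsw i Hi j Hij2 Hpre.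
rewrite /Rbit.
move: H1 H2 H3; case: (GSM p P T j) => [[RU RM] RD] /= H1 H2 H3.
case/orP: Hr => [/orP [] |] /eqP Er; subst r => /=.
- apply: H2; lia.
- apply: H1; lia.
- apply: H3; lia.
Qed.
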